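(* Let $(a_i)_{i\ge1}$ be a real sequence. Then $(a_i)_{i\ge1}$ is convex if and only if $$\sum_{i=1}^n\big(a_{\lfloor p_i\rfloor}-a_{\lfloor q_i\rfloor}\big)\le\sum_{i=1}^n\big(\{q_i\}\,\Delta a_{\lfloor q_i\rfloor}-\{p_i\}\,\Delta a_{\lfloor p_i\rfloor}\big)$$ holds for all $n\ge2$ and all $(p_1,\dots,p_n),(q_1,\dots,q_n)\in[1,\infty)^n$ with $(p_1,\dots,p_n)\prec(q_1,\dots,q_n)$.
   Context: $\Delta a_i=a_{i+1}-a_i$; a sequence is convex if $(\Delta a_i)_{i\ge1}$ is non-decreasing. $\lfloor x\rfloor$ is the floor and $\{x\}=x-\lfloor x\rfloor$ the fractional part. For $x,y\in\mathbb{R}^n$, with $x_{[1]}\ge\dots\ge x_{[n]}$ and $y_{[1]}\ge\dots\ge y_{[n]}$ the components in decreasing order, $x\prec y$ ($y$ majorizes $x$) means $\sum_{i=1}^k x_{[i]}\le\sum_{i=1}^k y_{[i]}$ for $k=1,\dots,n-1$ and $\sum_{i=1}^n x_i=\sum_{i=1}^n y_i$. *)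

(* Defs.v *)
From mathcomp Require Import all_boot all_order all_algebra.
From mathcomp Require Import reals.
Set Implicit Arguments. Unset Strict Implicit. Unset Printing Implicit Defensive.
Import Order.TTheory GRing.Theory Num.Theory.
Local Open Scope ring_scope.

(* Sequences (a_i)_{i>=1} are functions a : nat -> R; a 0 is irrelevant. *)
Definition Delta (R : realType) (a : nat -> R) (i : nat) : R := a i.+1 - a i.

Definition convex_seq (R : realType) (a : nat -> R) : Prop :=
  forall i : nat, (1 <= i)%N -> Delta a i <= Delta a i.+1.

Definition flo (R : realType) (x : R) : nat := `|Num.floor x|%N.
Definition fracpart (R : realType) (x : R) : R := x - (Num.floor x)%:~R.

(* components of x in decreasing order x_[1] >= ... >= x_[n] (0-indexed) *)
Definition decr (R : realType) (n : nat) (x : 'I_n -> R) : seq R :=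
  sort (fun u v : R => v <= u) [seq x i | i <- enum 'I_n].

Definition majorized (R : realType) (n : nat) (x y : 'I_n -> R) : Prop :=
  (forall k : nat, (1 <= k <= n.-1)%N ->
     \sum_(i < k) (decr x)`_i <= \sum_(i < k) (decr y)`_i)
  /\ \sum_(i < n) x i = \sum_(i < n) y i.

(* Main.v *)
Require Import Defs.
From mathcomp Require Import all_boot all_order all_algebra.
From mathcomp Require Import reals.
From mathcomp Require Import ring lra zify.
Import Order.TTheory GRing.Theory Num.Theory.
Local Open Scope ring_scope.

Section S.
Variable R : realType.

Lemma flo_prop (x : R) : 1 <= x ->
  [/\ (1 <= flo x)%N, (flo x)%:R <= x, x < (flo x)%:R + 1 &
      fracpart x = x - (flo x)%:R].
Proof.
move=> x1.
have f0 : 0 <= Num.floor x by rewrite floor_ge0; lra.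
have fe : ((flo x)%:R : R) = (Num.floor x)%:~R.
  by rewrite /flo -[in RHS](gez0_abs f0).
have g1 : (0 < Num.floor x) by rewrite floor_gt0.
split.
- by rewrite /flo -ltz_nat (gez0_abs f0).
- by rewrite fe floor_le.
- by rewrite fe -[1]/(1%:~R) -intrD floorD1_gt.
- by rewrite /fracpart fe.
Qed.

Lemma flo_nat (m : nat) : flo (m%:R : R) = m /\ fracpart (m%:R : R) = 0.
Proof.
have h : Num.floor (m%:R : R) = m%:Z := @intrKfloor R m%:Z.
by rewrite /flo /fracpart h /= subrr.
Qed.
Lemma decomp (a : nat -> R) j r :
  a 1%N + Delta a 1 * (j%:R + r) +
  \sum_(k < j) (Delta a k.+2 - Delta a k.+1) * (j%:R + r - k%:R - 1)
  = a j.+1 + r * Delta a j.+1.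
Proof.
elim: j r => [|j IH] r.
  by rewrite big_ord0 addr0 add0r mulrC.
rewrite big_ord_recr /=.
have -> : \sum_(i < j) (Delta a i.+2 - Delta a i.+1) * (j.+1%:R + r - i%:R - 1)
   = \sum_(i < j) (Delta a i.+2 - Delta a i.+1) * (j%:R + (r + 1) - i%:R - 1).
  by apply: eq_bigr => i _; rewrite -natr1; congr (_ * _); ring.
have E : j.+1%:R + r = j%:R + (r + 1) by rewrite -natr1; ring.
rewrite E addrA IH /Delta; ring.
Qed.

Lemma f_eq (a : nat -> R) (x : R) N : 1 <= x -> (flo x <= N.+1)%N ->
  a (flo x) + fracpart x * Delta a (flo x) =
  a 1%N + Delta a 1 * (x - 1) +
  \sum_(k < N) (Delta a k.+2 - Delta a k.+1) * Num.max (x - (k.+2)%:R) 0.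
Proof.
move=> x1 hN; case: (@flo_prop x x1) => m1 mle mlt fe.
move: mle mlt fe hN; case E: (flo x) m1 => [//|j] _ mle mlt fe hN.
rewrite fe -(decomp a j (x - j.+1%:R)).
have -> : x - 1 = j%:R + (x - j.+1%:R) by rewrite -natr1; ring.
congr (_ + _).
rewrite (big_ord_widen N (fun k : nat => (Delta a k.+2 - Delta a k.+1) * (j%:R + (x - j.+1%:R) - k%:R - 1))) //.
rewrite big_mkcond /=; apply: eq_bigr => k _.
case: ifP => hk.
  congr (_ * _); rewrite max_l.
    rewrite -!natr1 -[(k%:R + 1 + 1)]addrA; ring.
  rewrite subr_ge0; apply: le_trans mle; rewrite ler_nat; exact: hk.
rewrite (@max_r _ _ (x - k.+2%:R) 0) ?mulr0 //.
have : (j <= k)%N by rewrite leqNgt hk.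
rewrite -(ler_nat R) => hjk.
rewrite subr_le0 -!natr1; lra.
Qed.
Definition geR := fun u v : R => v <= u.

Lemma sorted_pos (s : seq R) t : sorted geR s ->
  exists2 k, (k <= size s)%N &
    \sum_(v <- s) Num.max (v - t) 0 = \sum_(i < k) (s`_i - t).
Proof.
elim: s => [|v s IH] /= hs.
  by exists 0%N => //; rewrite big_nil big_ord0.
have hs' := path_sorted hs.
case: (leP v t) => hvt.
  exists 0%N => //; rewrite big_ord0 big1_seq // => w /andP [_].
  rewrite inE => /orP [/eqP -> | hw]; first by rewrite max_r // subr_le0.
  have hall : all (geR v) s.
    apply: order_path_min hs => y z w' hzy hyw; rewrite /geR in hzy hyw *.
    exact: le_trans hyw hzy.
  move/allP: hall => /(_ w hw); rewrite /geR => hwv.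
  by rewrite max_r // subr_le0; apply: le_trans hwv hvt.
case: (IH hs') => k hk E.
exists k.+1; first by [].
rewrite big_cons E big_ord_recl /= max_l //; last by rewrite subr_ge0 ltW.
Qed.
Lemma sum_nth (s : seq R) (F : R -> R) :
  \sum_(v <- s) F v = \sum_(i < size s) F s`_i.
Proof. by rewrite (big_nth 0) big_mkord. Qed.

Lemma size_decr n (x : 'I_n -> R) : size (decr x) = n.
Proof. by rewrite /decr size_sort size_map size_enum_ord. Qed.

Lemma sorted_decr n (x : 'I_n -> R) : sorted geR (decr x).
Proof.
apply: sort_sorted => u v; rewrite /geR; case: (leP u v) => h; [by rewrite orbT| by rewrite ltW].
Qed.

Lemma sum_decr n (x : 'I_n -> R) (F : R -> R) :
  \sum_(v <- decr x) F v = \sum_(i < n) F (x i).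
Proof.
rewrite /decr (perm_big _ (permEl (perm_sort _ _))) big_map big_enum /=.
by apply: eq_bigl => i.
Qed.

Lemma partial n (p q : 'I_n -> R) : majorized p q ->
  forall k, (k <= n)%N -> \sum_(i<k) (decr p)`_i <= \sum_(i<k) (decr q)`_i.
Proof.
case=> hk hs k kn.
case: k kn => [|k] kn; first by rewrite !big_ord0.
case: (ltnP k n.-1) => h.
  by apply: hk; apply/andP; split=> //; lia.
have -> : k.+1 = n by lia.
have := @sum_decr _ p id; have := @sum_decr _ q id.
rewrite !sum_nth !size_decr /= => -> ->; rewrite hs.
by [].
Qed.

Lemma K n (p q : 'I_n -> R) t : majorized p q ->
  \sum_(i < n) Num.max (p i - t) 0 <= \sum_(i < n) Num.max (q i - t) 0.
Proof.
move=> hm.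
rewrite -(@sum_decr _ p (fun v => Num.max (v - t) 0)).
rewrite -(@sum_decr _ q (fun v => Num.max (v - t) 0)).
case: (@sorted_pos _ t (@sorted_decr _ p)) => k; rewrite size_decr => kn ->.
rewrite sum_nth size_decr.
rewrite sumrB.
apply: (@le_trans _ _ (\sum_(i < k) ((decr q)`_i - t))).
  rewrite sumrB lerD2r; exact: partial.
apply: (@le_trans _ _ (\sum_(i < k) Num.max ((decr q)`_i - t) 0)).
  by apply: ler_sum => i _; rewrite le_max lexx.
rewrite (big_ord_widen n (fun i => Num.max ((decr q)`_i - t) 0) kn).
rewrite [X in _ <= X](bigID (fun i : 'I_n => (i < k)%N)) /= lerDl.
by apply: sumr_ge0 => i _; rewrite le_max lexx orbT.
Qed.
Lemma forward (a : nat -> R) : convex_seq a ->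
  (forall (n : nat), (2 <= n)%N ->
   forall p q : 'I_n -> R,
     (forall i, 1 <= p i) -> (forall i, 1 <= q i) ->
     majorized p q ->
     \sum_(i < n) (a (flo (p i)) - a (flo (q i)))
       <= \sum_(i < n) (fracpart (q i) * Delta a (flo (q i))
                        - fracpart (p i) * Delta a (flo (p i)))).
Proof.
move=> ca n _ p q hp hq hm.
set N := \max_(i < n) maxn (flo (p i)) (flo (q i)).
have bp i : (flo (p i) <= N.+1)%N.
  apply: leq_trans (leqnSn _); apply: leq_trans (leq_bigmax i).
  exact: leq_maxl.
have bq i : (flo (q i) <= N.+1)%N.
  apply: leq_trans (leqnSn _); apply: leq_trans (leq_bigmax i).
  exact: leq_maxr.
set c := fun k : nat => Delta a k.+2 - Delta a k.+1.
pose f (x : R) := a 1%N + Delta a 1 * (x - 1) +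
  \sum_(k < N) c k * Num.max (x - (k.+2)%:R) 0.
suff H : \sum_(i < n) (a (flo (p i)) + fracpart (p i) * Delta a (flo (p i)))
      <= \sum_(i < n) (a (flo (q i)) + fracpart (q i) * Delta a (flo (q i))).
  move: H; rewrite !big_split !sumrN /=; lra.
rewrite (eq_bigr (fun i => f (p i))); last by move=> i _; exact: f_eq.
rewrite [X in _ <= X](eq_bigr (fun i => f (q i))); last by move=> i _; exact: f_eq.
rewrite /f !big_split /= lerD //.
  by rewrite -!mulr_sumr; case: hm => _ hs; rewrite !sumrB hs.
rewrite exchange_big [X in _ <= X]exchange_big /=.
apply: ler_sum => k _; rewrite -!mulr_sumr; apply: ler_wpM2l.
  by rewrite /c subr_ge0; apply: ca.
exact: K.
Qed.
Lemma backward (a : nat -> R) :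
  (forall (n : nat), (2 <= n)%N ->
   forall p q : 'I_n -> R,
     (forall i, 1 <= p i) -> (forall i, 1 <= q i) ->
     majorized p q ->
     \sum_(i < n) (a (flo (p i)) - a (flo (q i)))
       <= \sum_(i < n) (fracpart (q i) * Delta a (flo (q i))
                        - fracpart (p i) * Delta a (flo (p i)))) ->
  convex_seq a.
Proof.
move=> H i i1.
pose p := fun j : 'I_2 => (i.+1%:R : R).
pose q := fun j : 'I_2 => if j == ord0 then (i.+2%:R : R) else i%:R.
have i1R : 1 <= (i%:R : R) by rewrite ler1n.
have hp j : 1 <= p j by rewrite /p ler1n.
have hq j : 1 <= q j.
  by rewrite /q; case: ifP => _ //; rewrite ler1n.
have trans : transitive geR by move=> x y z; rewrite /geR => h1 h2; exact: le_trans h2 h1.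
have dp : decr p = [:: i.+1%:R; i.+1%:R].
  rewrite /decr enum_ordSl enum_ordSl enum_ord0 /=.
  by rewrite sorted_sort //= /geR lexx.
have dq : decr q = [:: i.+2%:R; i%:R].
  rewrite /decr enum_ordSl enum_ordSl enum_ord0 /=.
  rewrite sorted_sort //= /geR /q /= andbT ler_nat; lia.
have hm : majorized p q.
  split.
    move=> k /andP [k1 k2]; have -> : k = 1%N by lia.
    by rewrite !big_ord_recl !big_ord0 dp dq /= !addr0 ler_nat.
  rewrite !big_ord_recl !big_ord0 /p /q /= -!natr1; ring.
have := H 2%N isT p q hp hq hm.
rewrite !big_ord_recl !big_ord0 /p /q /=.
move: (flo_nat i.+1) (flo_nat i.+2) (flo_nat i) => [e1 f1] [e2 f2] [e3 f3].
rewrite e1 e2 e3 f1 f2 f3 !mul0r /Delta => h.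
lra.
Qed.
End S.

Theorem theorem4p7 (R : realType) (a : nat -> R) :
  convex_seq a <->
  (forall (n : nat), (2 <= n)%N ->
   forall p q : 'I_n -> R,
     (forall i, 1 <= p i) -> (forall i, 1 <= q i) ->
     majorized p q ->
     \sum_(i < n) (a (flo (p i)) - a (flo (q i)))
       <= \sum_(i < n) (fracpart (q i) * Delta a (flo (q i))
                        - fracpart (p i) * Delta a (flo (p i)))).
Proof. split; [exact: forward | exact: backward]. Qed.
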